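(* Let $f_0(n)=1$ for odd $n$ and $f_0(n)=0$ for even $n$. Then for every $m\ge1$ and $1\le k\le n$, $c_m(n,k)$ equals the number of words of length $n-1$ over the alphabet $\{0,1,\ldots,m\}$ with exactly $k-1$ letters equal to $m$ that avoid runs of zeros of odd length (every maximal block of consecutive zeros has even length).
   Context: For $m\ge 1$, $f_m$ is the invert transform of $f_{m-1}$, i.e. $f_m(n)=f_{m-1}(n)+\sum_{i=1}^{n-1}f_{m-1}(i)f_m(n-i)$ for $n\ge1$. For $m\ge1$ the numbers $c_m(n,k)$, $0\le k\le n$, are defined by $c_m(0,0)=1$, $c_m(n,0)=0$ for $n\ge1$, and $c_m(n,k)=\sum_{i=1}^{n-k+1}f_{m-1}(i)\,c_m(n-i,k-1)$ for $1\le k\le n$. Words may be empty. *)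

(* Defs.v *)
From mathcomp Require Import all_boot.
Set Implicit Arguments. Unset Strict Implicit. Unset Printing Implicit Defensive.

(* Sequences are indexed from 1; the value at index 0 is irrelevant (set to 0). *)

Definition f0 (n : nat) : nat := odd n.

(* invert_seq g n = [:: h 1; ...; h n] where h is the invert transform of g:
   h n = g n + \sum_{i=1}^{n-1} g i * h (n - i). *)
Fixpoint invert_seq (g : nat -> nat) (n : nat) : seq nat :=
  match n with
  | 0 => [::]
  | n'.+1 =>
      let s := invert_seq g n' in
      rcons s (g n'.+1 + \sum_(1 <= i < n'.+1) g i * nth 0 s (n'.+1 - i).-1)
  end.

Definition invert (g : nat -> nat) (n : nat) : nat :=
  if n is 0 then 0 else nth 0 (invert_seq g n) n.-1.

Fixpoint f (m : nat) : nat -> nat :=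
  match m with
  | 0 => f0
  | m'.+1 => invert (f m')
  end.

Fixpoint c_aux (g : nat -> nat) (n k : nat) : nat :=
  match k with
  | 0 => (n == 0 : nat)
  | k'.+1 => \sum_(1 <= i < (n - k'.+1).+2) g i * c_aux g (n - i) k'
  end.

Definition c (m n k : nat) : nat := c_aux (f m.-1) n k.

Definition max_zero_block (s : seq nat) (i j : nat) : bool :=
  [&& i < j, j <= size s,
      all (fun p => nth 1 s p == 0) (iota i (j - i)),
      (i == 0) || (nth 1 s i.-1 != 0) &
      (j == size s) || (nth 1 s j != 0)].

Definition no_odd_zero_runs (s : seq nat) : bool :=
  [forall i : 'I_(size s).+1, forall j : 'I_(size s).+1,
     max_zero_block s i j ==> ~~ odd (j - i)].

Definition nwords (m L r : nat) : nat :=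
  #|[set w : L.-tuple 'I_m.+1 |
      (count (fun x : 'I_m.+1 => val x == m) w == r)
      && no_odd_zero_runs (map val w)]|.

(* Main.v *)
Require Import Defs.
From mathcomp Require Import all_boot.
From mathcomp Require Import zify.
Set Implicit Arguments. Unset Strict Implicit. Unset Printing Implicit Defensive.

Fixpoint wds (m L : nat) : seq (seq nat) :=
  if L is L'.+1 then [seq x :: w | x <- index_iota 0 m.+1, w <- wds m L'] else [:: [::]].

Lemma sum_wdsS m L (F : seq nat -> nat) :
  \sum_(w <- wds m L.+1) F w = \sum_(0 <= x < m.+1) \sum_(w <- wds m L) F (x :: w).
Proof. exact: big_allpairs_dep. Qed.

Lemma sum_wds0 m (F : seq nat -> nat) : \sum_(w <- wds m 0) F w = F [::].
Proof. by rewrite /= big_seq1. Qed.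

Lemma wdsS m L : wds m L.+1 = [seq x :: w | x <- index_iota 0 m.+1, w <- wds m L].
Proof. by []. Qed.

Lemma mem_wds m L w : (w \in wds m L) = (size w == L) && all (fun x => x < m.+1) w.
Proof.
elim: L w => [|L IH] w.
  by rewrite mem_seq1; case: w.
rewrite wdsS; case: w => [|x w].
  by apply/negbTE/negP => /allpairsP [[y v] [_ _]].
rewrite [size _]/= eqSS [all _ _]/=; apply/allpairsP/idP.
- case=> [[y v] /= [hy hv [-> ->]]].
  by move: hy hv; rewrite mem_index_iota IH => /andP[_ ->] ->.
- move=> /andP[hs /andP[hx ha]]; exists (x, w) => /=; split => //.
  + by rewrite mem_index_iota.
  + by rewrite IH hs.
Qed.

Lemma uniq_wds m L : uniq (wds m L).
Proof.
elim: L => [|L IH] //.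
rewrite wdsS; apply: allpairs_uniq => //; first exact: iota_uniq.
by move=> [a b] [c d] _ _ /= [-> ->].
Qed.

Lemma split_sum m L (F : seq nat -> nat) :
  \sum_(w <- wds m.+1 L) F w = \sum_(w <- wds m L) F w +
  \sum_(i < L) \sum_(u <- wds m i) \sum_(v <- wds m.+1 (L.-1 - i)) F (u ++ m.+1 :: v).
Proof.
elim: L F => [|L IH] F.
  by rewrite !sum_wds0 big_ord0 addn0.
rewrite !sum_wdsS big_nat_recr //=.
under eq_bigr => x _ do rewrite IH.
rewrite big_split big_ord_recl sum_wds0 subn0.
rewrite [X in _ = _ + (_ + X)](_ : _ = \sum_(0 <= x < m.+1) \sum_(i < L)
   \sum_(u <- wds m i) \sum_(v <- wds m.+1 (L.-1 - i)) F ((x :: u) ++ m.+1 :: v)).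
  by rewrite -!addnA; congr (_ + _); rewrite addnC.
rewrite exchange_big; apply: eq_bigr => i _.
rewrite sum_wdsS; apply: eq_bigr => x _; apply: eq_bigr => u _.
by have -> : L - bump 0 i = L.-1 - i by rewrite /bump; lia.
Qed.

Fixpoint okp (p : bool) (s : seq nat) : bool :=
  match s with
  | [::] => ~~ p
  | x :: s' => if x == 0 then okp (~~ p) s' else ~~ p && okp false s'
  end.
Definition ok s := okp false s.

Lemma okp_cat p u x v : x != 0 -> okp p (u ++ x :: v) = okp p u && ok v.
Proof.
move=> hx; elim: u p => [|y u IH] p /=; first by rewrite (negbTE hx).
by case: (y == 0); rewrite IH // andbA.
Qed.

Lemma okp_nseq p n : okp p (nseq n 0) = ~~ (p (+) odd n).
Proof. by elim: n p => [|n IH] p /=; [case: p | rewrite IH; case: p; case: (odd n)]. Qed.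

Definition zf (s : seq nat) p := nth 1 s p == 0.

Lemma zf_size s p : zf s p -> p < size s.
Proof. by rewrite /zf; case: ltnP => // h; rewrite nth_default. Qed.

Lemma mzbP s i j : max_zero_block s i j <->
  [/\ i < j, (forall p, i <= p < j -> zf s p), (i = 0 \/ ~~ zf s i.-1) & ~~ zf s j].
Proof.
rewrite /max_zero_block; split.
- case/and5P => hij hj /allP ha hi hj2; split => //.
  + move=> p hp; apply: ha; rewrite mem_iota; lia.
  + by case/orP: hi => [/eqP ->|]; [left | right].
  + case/orP: hj2 => [/eqP ->|//]; by rewrite /zf nth_default.
- case=> hij ha hi hj; apply/and5P; split => //.
  + have := ha j.-1; rewrite (_ : (i <= j.-1 < j) = true); last by lia.
    by move/(_ isT)/zf_size; lia.
  + apply/allP => p; rewrite mem_iota => hp; apply: ha; lia.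
  + by case: hi => [->|->]; rewrite ?eqxx ?orbT.
  + by rewrite hj orbT.
Qed.

Lemma norP s : reflect (forall i j, max_zero_block s i j -> ~~ odd (j - i))
  (no_odd_zero_runs s).
Proof.
apply: (iffP forallP) => H.
- move=> i j hb; have /mzbP [hij ha _ _] := hb.
  have hj : j.-1 < size s by apply: zf_size; apply: ha; lia.
  have hi' : i < (size s).+1 by lia.
  have hj' : j < (size s).+1 by lia.
  exact: (implyP (forallP (H (Ordinal hi')) (Ordinal hj')) hb).
- move=> i; apply/forallP => j; apply/implyP; exact: H.
Qed.

Lemma zf_cat a t p : zf (nseq a 0 ++ t) p = if p < a then true else zf t (p - a).
Proof. by rewrite /zf nth_cat size_nseq nth_nseq; case: ltnP. Qed.

Lemma zf_cons x s p : x != 0 -> zf (x :: s) p = if p is p'.+1 then zf s p' else false.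
Proof. by move=> hx; case: p => [|p] //=; rewrite /zf /= (negbTE hx). Qed.

Lemma B1 a t i j : ~~ zf t 0 -> max_zero_block (nseq a 0 ++ t) i j ->
  (i = 0 /\ j = a) \/ (a <= i /\ max_zero_block t (i - a) (j - a)).
Proof.
move=> ht /mzbP [hij ha hi hj]; case: (ltnP i a) => hia.
- left; split.
  + case: hi => [//|]; rewrite zf_cat; case: ifP => [_ //|]; lia.
  + case: (ltngtP j a) => // hja.
    * by move: hj; rewrite zf_cat hja.
    * have := ha a; rewrite zf_cat ltnn subnn => h; move/negP: ht; case; apply: h; lia.
- right; split => //; apply/mzbP; split.
  + lia.
  + move=> p hp; have := ha (p + a); rewrite zf_cat.
    have -> : (p + a < a) = false by lia.
    rewrite addnK; apply; lia.
  + case: (ltngtP a i) => hai; last by left; rewrite hai subnn.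
    * right; case: hi => [hi0|]; first lia.
      rewrite zf_cat; have -> : (i.-1 < a) = false by lia.
      by have -> : i.-1 - a = (i - a).-1 by lia.
    * lia.
  + by move: hj; rewrite zf_cat; have -> : (j < a) = false by lia.
Qed.

Lemma B2a a t : 0 < a -> ~~ zf t 0 -> max_zero_block (nseq a 0 ++ t) 0 a.
Proof.
move=> ha ht; apply/mzbP; split => //.
- by move=> p hp; rewrite zf_cat; have -> : p < a by lia.
- by left.
- by rewrite zf_cat ltnn subnn.
Qed.

Lemma B2b a t i j : ~~ zf t 0 -> max_zero_block t i j ->
  max_zero_block (nseq a 0 ++ t) (i + a) (j + a).
Proof.
move=> ht /mzbP [hij ha hi hj].
have hi0 : 0 < i.
  case: (posnP i) => // hi0; subst i; move/negP: ht; case; apply: ha; lia.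
apply/mzbP; split.
- lia.
- move=> p hp; rewrite zf_cat; have -> : (p < a) = false by lia.
  apply: ha; lia.
- case: hi => hi; first lia.
  right; rewrite zf_cat; have -> : ((i + a).-1 < a) = false by lia.
  by have -> : (i + a).-1 - a = i.-1 by lia.
- rewrite zf_cat; have -> : (j + a < a) = false by lia.
  by rewrite addnK.
Qed.

Lemma Acons x s i j : x != 0 ->
  (max_zero_block (x :: s) i j <-> 0 < i /\ max_zero_block s i.-1 j.-1).
Proof.
move=> hx; split.
- move=> /mzbP [hij ha hi hj].
  have hi0 : 0 < i.
    case: (posnP i) => // hi0; subst i; have := ha 0; rewrite zf_cons //; apply; lia.
  split => //; apply/mzbP; split.
  + lia.
  + move=> p hp; have := ha p.+1; rewrite zf_cons //; apply; lia.
  + case: hi => hi; first lia.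
    case: (posnP i.-1) => hi1; first by left.
    right; move: hi; rewrite zf_cons //.
    by case: i hi0 hi1 {hij ha hj} => [|[|i]].
  + move: hj; rewrite zf_cons //; by case: j hij {ha} => [|j].
- case=> hi0 /mzbP [hij ha hi hj]; apply/mzbP; split.
  + lia.
  + move=> p hp; rewrite zf_cons //; case: p hp => [|p] hp; first lia.
    apply: ha; lia.
  + case: hi => hi.
    * right; rewrite zf_cons //; case: i hi0 hi {hij ha} => [|[|i]] //.
    * right; rewrite zf_cons //; case: i hi0 hi {hij ha} => [|[|i]] //.
  + rewrite zf_cons //; case: j hij hj {ha} => [|j] //; lia.
Qed.

Lemma nor_cat a t : ~~ zf t 0 ->
  no_odd_zero_runs (nseq a 0 ++ t) = ~~ odd a && no_odd_zero_runs t.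
Proof.
move=> ht; apply/norP/andP.
- move=> H; split.
  + case: (posnP a) => [-> //|ha]; have := H 0 a (B2a ha ht); by rewrite subn0.
  + apply/norP => i j hb; have := H (i + a) (j + a) (B2b a ht hb); by rewrite subnDr.
- case=> ha /norP ht' i j hb; case: (B1 ht hb) => [[-> ->]|[hai hb']].
  + by rewrite subn0.
  + have := ht' _ _ hb'; have /mzbP [hij _ _ _] := hb.
    by have -> : j - a - (i - a) = j - i by lia.
Qed.

Lemma nor_cons x s : x != 0 -> no_odd_zero_runs (x :: s) = no_odd_zero_runs s.
Proof.
move=> hx; apply/norP/norP.
- move=> H i j hb; have := H i.+1 j.+1; rewrite subSS; apply; apply/(Acons _ _ _ hx).
  by split.
- move=> H i j /(Acons _ _ _ hx) [hi0 hb]; have := H _ _ hb.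
  have /mzbP [hij _ _ _] := hb.
  by have -> : j.-1 - i.-1 = j - i by lia.
Qed.

Lemma nor_nil : no_odd_zero_runs [::].
Proof. by apply/norP => i j /mzbP [hij ha _ _]; have := ha i; rewrite /zf nth_nil; lia. Qed.

Lemma nor_okp a s : no_odd_zero_runs (nseq a 0 ++ s) = okp (odd a) s.
Proof.
elim: s a => [|x s IH] a.
  by rewrite nor_cat // nor_nil andbT.
case: (eqVneq x 0) => [->|hx].
  have -> : nseq a 0 ++ 0 :: s = nseq a.+1 0 ++ s by elim: a => //= a ->.
  by rewrite IH /=.
rewrite nor_cat /=; last by rewrite /zf /= hx.
by rewrite (negbTE hx) nor_cons // -(IH 0).
Qed.

Lemma nor_ok s : no_odd_zero_runs s = ok s.
Proof. exact: (nor_okp 0 s). Qed.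

Lemma size_invert_seq g n : size (invert_seq g n) = n.
Proof. by elim: n => //= n IH; rewrite size_rcons IH. Qed.

Lemma nth_invert_seq g n k : k < n -> nth 0 (invert_seq g n) k = invert g k.+1.
Proof.
elim: n => [//|n IH] hk.
rewrite /invert /=. rewrite nth_rcons size_invert_seq.
case: (ltngtP k n) => h.
- by rewrite IH.
- lia.
- by subst k; rewrite nth_rcons size_invert_seq ltnn eqxx.
Qed.

Lemma invertS g n : invert g n.+1 = g n.+1 + \sum_(1 <= i < n.+1) g i * invert g (n.+1 - i).
Proof.
rewrite /invert /= nth_rcons size_invert_seq ltnn eqxx; congr (_ + _).
apply: eq_big_nat => i hi; rewrite nth_invert_seq; last by lia.
by have -> : (n.+1 - i).-1.+1 = n.+1 - i by lia.
Qed.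

Definition G m L := \sum_(w <- wds m L) ok w.

Lemma wds0 L : wds 0 L = [:: nseq L 0].
Proof. by elim: L => //= L ->. Qed.

Lemma sum_bool_mul (s t : seq (seq nat)) (P Q : pred (seq nat)) :
  \sum_(u <- s) \sum_(v <- t) (P u && Q v) = (\sum_(u <- s) P u) * (\sum_(v <- t) Q v).
Proof.
rewrite big_distrl; apply: eq_bigr => u _; rewrite big_distrr; apply: eq_bigr => v _.
by case: (P u); case: (Q v).
Qed.

Lemma f_G j n : f j n.+1 = G j n.
Proof.
elim: j n => [|j IHj] n.
  by rewrite /G wds0 big_seq1 /ok okp_nseq /= /f0 /=.
elim/ltn_ind: n => n IHn.
change (f j.+1 n.+1) with (invert (f j) n.+1).
rewrite invertS /G split_sum -/(G j n) -IHj; congr (_ + _).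
rewrite big_add1 /= big_mkord; apply: eq_bigr => i _.
under eq_bigr => u _ do under eq_bigr => v _ do rewrite /ok okp_cat //.
rewrite sum_bool_mul -/(G j i) -/(G j.+1 _) -IHj -IHn; last by have := ltn_ord i; lia.
have -> : (n.-1 - i).+1 = n.+1 - i.+1 by have := ltn_ord i; lia.
by [].
Qed.

Definition W M L r := \sum_(w <- wds M.+1 L) (ok w && (count (pred1 M.+1) w == r)).

Lemma count_low M i u : u \in wds M i -> count (pred1 M.+1) u = 0.
Proof.
rewrite mem_wds => /andP[_ /allP ha]; apply/eqP; rewrite -leqn0 leqNgt -has_count.
by apply/hasPn => x /ha /=; rewrite neq_ltn => ->.
Qed.

Lemma W0 M L : W M L 0 = G M L.
Proof.
rewrite /W split_sum [X in _ + X = _]big1 ?addn0.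
  by apply: eq_big_seq => w hw; rewrite (count_low hw) andbT.
move=> i _; apply: big1 => u _; apply: big1 => v _.
by rewrite count_cat /= eqxx addnCA add1n /= andbF.
Qed.

Lemma WS M L r : W M L r.+1 = \sum_(i < L) G M i * W M (L.-1 - i) r.
Proof.
rewrite /W split_sum big1_seq ?add0n; last first.
  by move=> w /andP[_ hw]; rewrite (count_low hw) andbF.
apply: eq_bigr => i _.
rewrite /G -(sum_bool_mul _ _ ok (fun v => ok v && (count (pred1 M.+1) v == r))).
apply: eq_big_seq => u hu; apply: eq_bigr => v _.
by rewrite /ok okp_cat // count_cat (count_low hu) /= eqxx add1n eqSS andbA.
Qed.

Lemma W_small M L r : L < r -> W M L r = 0.
Proof.
move=> hL; apply: big1_seq => w /andP[_ hw]; move: hw; rewrite mem_wds => /andP[/eqP hs _].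
have := count_size (pred1 M.+1) w; rewrite hs => hc.
have -> : (count (pred1 M.+1) w == r) = false by lia.
by rewrite andbF.
Qed.

Lemma c_W M k n : k < n -> c_aux (f M) n k.+1 = W M n.-1 k.
Proof.
elim: k n => [|k IH] n hn.
  rewrite W0 -f_G prednK //.
  change (c_aux (f M) n 1) with
    (\sum_(1 <= i < (n - 1).+2) f M i * (n - i == 0 : nat)).
  have -> : (n - 1).+2 = n.+1 by lia.
  rewrite big_nat_recr //= subnn muln1 big1_seq ?add0n //.
  move=> i /andP[_]; rewrite mem_index_iota => hi.
  have -> : (n - i == 0) = false by lia.
  by rewrite muln0.
rewrite WS.
change (c_aux (f M) n k.+2) with
  (\sum_(1 <= i < (n - k.+2).+2) f M i * c_aux (f M) (n - i) k.+1).
have -> : (n - k.+2).+2 = n - k by lia.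
rewrite (big_addn 0 (n - k) 1) -(big_mkord xpredT (fun i => G M i * W M (n.-1.-1 - i) k)).
rewrite [RHS](big_cat_nat _ (n := n - k - 1)) //; last by lia.
rewrite [X in _ = _ + X]big1_seq ?addn0; last first.
  move=> i /andP[_]; rewrite mem_index_iota => hi.
  by rewrite W_small ?muln0 //; lia.
apply: eq_big_nat => i hi.
rewrite addn1 f_G IH; last by lia.
by have -> : (n - i.+1).-1 = n.-1.-1 - i by lia.
Qed.

Lemma card_wds m L (Pr : pred (seq nat)) :
  #|[set w : L.-tuple 'I_m.+1 | Pr (map val w)]| = \sum_(w <- wds m L) Pr w.
Proof.
have H : perm_eq [seq map val (tval t) | t <- enum {:L.-tuple 'I_m.+1}] (wds m L).
  apply: uniq_perm.
  - rewrite map_inj_uniq ?enum_uniq // => t1 t2 /(inj_map val_inj) /val_inj //.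
  - exact: uniq_wds.
  - move=> w; rewrite mem_wds; apply/mapP/andP.
    + case=> t _ ->; rewrite size_map size_tuple; split => //.
      by apply/allP => x /mapP [y _ ->]; exact: ltn_ord.
    + case=> /eqP hs /allP ha.
      have hs' : size (map (@inord m) w) == L by rewrite size_map hs.
      exists (Tuple hs'); first by rewrite mem_enum.
      rewrite /= -map_comp map_id_in // => x hx /=; rewrite inordK //; exact: ha.
rewrite cardsE cardE /enum_mem size_filter -enumT.
rewrite (eq_count (a2 := fun t : L.-tuple 'I_m.+1 => Pr (map val t))) //.
rewrite -(count_map (fun t : L.-tuple 'I_m.+1 => map val (tval t)) Pr).
rewrite (permP H) -sum1_count big_mkcond; apply: eq_bigr => w _.
by case: (Pr w).
Qed.

Theorem corollary23 (m n k : nat) :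
  1 <= m -> 1 <= k -> k <= n ->
  c m n k = nwords m n.-1 k.-1.
Proof.
case: m => [//|M] _; case: k => [//|k] _ hk.
change (c M.+1 n k.+1) with (c_aux (f M) n k.+1); rewrite c_W // /nwords.
set Pr := fun s : seq nat => ok s && (count (pred1 M.+1) s == k).
have -> : [set w : n.-1.-tuple 'I_M.+2 | (count (fun x : 'I_M.+2 => val x == M.+1) w == k)
      && no_odd_zero_runs (map val w)] = [set w : n.-1.-tuple 'I_M.+2 | Pr (map val w)].
  by apply/setP => w; rewrite !inE /Pr count_map nor_ok andbC.
by rewrite card_wds.
Qed.
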